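(* For every $n>2$, let $K_{1,n-1}$ be the star graph on $n$ vertices. Then $\mathrm{ch}_{um}(H_P(K_{1,n-1}))\ge n-1$, while $\chi_{um}(H_P(K_{1,n-1}))=2$.
   Context: For a simple graph $G=(V,E)$, $H_P(G)$ is the hypergraph with vertex set $V$ whose hyperedges are the vertex sets of all simple paths in $G$. A coloring $C\colon V\to\mathbb Z_{>0}$ is unique-maximum if in every hyperedge the maximum color is attained by exactly one vertex. $\chi_{um}(H)$ is the minimum number of colors in a unique-maximum coloring of $H$. The um-choice number $\mathrm{ch}_{um}(H)$ is the minimum $k$ such that for every family $\{L_v\}_{v\in V}$ of sets of positive integers with $|L_v|\ge k$ there is a unique-maximum coloring $C$ with $C(v)\in L_v$ for all $v$. *)

(* Defs.v *)
From mathcomp Require Import all_boot.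
Set Implicit Arguments. Unset Strict Implicit. Unset Printing Implicit Defensive.

(* A simple graph is a symmetric irreflexive relation [e : rel T] on a finType. *)

Definition simple_path (T : finType) (e : rel T) (p : seq T) : bool :=
  if p is x :: q then path e x q && uniq p else false.

Definition HP (T : finType) (e : rel T) (S : {set T}) : Prop :=
  exists p, simple_path e p /\ S = [set v in p].

Definition unique_max (T : finType) (C : T -> nat) (S : {set T}) : bool :=
  #|[set v in S | C v == \max_(w in S) C w]| == 1.

Definition um_coloring (T : finType) (H : {set T} -> Prop) (C : T -> nat) : Prop :=
  (forall v, 0 < C v) /\ (forall S, H S -> unique_max C S).

Definition num_colors (T : finType) (C : T -> nat) : nat := size (undup [seq C v | v <- enum T]).

Definition chi_um_is (T : finType) (H : {set T} -> Prop) (k : nat) : Prop :=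
  (exists C, um_coloring H C /\ num_colors C = k) /\
  (forall C, um_coloring H C -> k <= num_colors C).

Definition card_ge (A : nat -> Prop) (k : nat) : Prop :=
  exists s : seq nat, [/\ uniq s, k <= size s & forall x, x \in s -> A x].

Definition um_choosable (T : finType) (H : {set T} -> Prop) (k : nat) : Prop :=
  forall L : T -> nat -> Prop,
    (forall v x, L v x -> 0 < x) ->
    (forall v, card_ge (L v) k) ->
    exists C, um_coloring H C /\ (forall v, L v (C v)).

(* ch_um(H) >= m : every k that works is at least m (ch_um is the least such k) *)
Definition ch_um_ge (T : finType) (H : {set T} -> Prop) (m : nat) : Prop :=
  forall k, um_choosable H k -> m <= k.

(* Star K_{1,n-1} on 'I_n, with center 0: i ~ j iff exactly one of them is 0. *)
Definition star (n : nat) : rel 'I_n :=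
  fun i j => (val i == 0) != (val j == 0).
Arguments star n : clear implicits.

(* Main.v *)
Require Import Defs.
From mathcomp Require Import all_boot.
Set Implicit Arguments. Unset Strict Implicit.

Lemma bigmax_at (T : finType) (C : T -> nat) (S : {set T}) x :
  x \in S -> (forall w, w \in S -> C w <= C x) -> \max_(w in S) C w = C x.
Proof.
move=> xS H; apply/eqP; rewrite eqn_leq; apply/andP; split.
  by apply/bigmax_leqP => w; exact: H.
by apply: leq_bigmax_cond.
Qed.

Lemma um_at (T : finType) (C : T -> nat) (S : {set T}) x :
  x \in S -> (forall w, w \in S -> w != x -> C w < C x) -> unique_max C S.
Proof.
move=> xS H.
have Hm : \max_(w in S) C w = C x.
  apply: (@bigmax_at _ C S x xS) => w wS; case: (eqVneq w x) => [->//|wx].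
  exact: ltnW (H w wS wx).
rewrite /unique_max Hm (_ : [set v in S | C v == C x] = [set x]) ?cards1 //.
apply/setP => v; rewrite !inE; case: (eqVneq v x) => [->|vx]; first by rewrite xS eqxx.
by case vS: (v \in S) => //=; rewrite ltn_eqF // H.
Qed.

Lemma not_um (T : finType) (C : T -> nat) (S : {set T}) x y :
  x \in S -> y \in S -> x != y -> C x = C y ->
  (forall w, w \in S -> C w <= C x) -> ~~ unique_max C S.
Proof.
move=> xS yS xy Cxy H.
rewrite /unique_max (bigmax_at xS H).
have : #|[set x; y]| <= #|[set v in S | C v == C x]|.
  apply: subset_leq_card; apply/subsetP => v; rewrite !inE.
  by case/orP => /eqP ->; rewrite ?xS ?yS ?Cxy eqxx.
rewrite cards2 xy; by case: eqP => // ->.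
Qed.

Theorem mainTheorem10 (n : nat) (hn : 2 < n) :
  ch_um_ge (HP (star n)) n.-1 /\ chi_um_is (HP (star n)) 2.
Proof.
case: n hn => [//|m] hm /=.
have m0 : 0 < m by rewrite -ltnS; apply: ltn_trans _ hm.
have leafE : forall i : 'I_m, star m.+1 ord0 (lift ord0 i) && star m.+1 (lift ord0 i) ord0.
  by move=> i; rewrite /star /=.
have leaf1 : forall i : 'I_m, star m.+1 (lift ord0 i) ord0 by [].
have leaf2 : forall i : 'I_m, star m.+1 ord0 (lift ord0 i) by [].
have l0 : forall i : 'I_m, (lift ord0 i == ord0) = false.
  by move=> i; rewrite eq_sym; apply/negbTE/neq_lift.
split.
- move=> k Hk; rewrite leqNgt; apply/negP => km.
  pose L (v : 'I_m.+1) (x : nat) :=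
    if v == ord0 then (0 < x) && (x < m) else (m <= x) && (x < m + m.-1).
  have H1 : forall v x, L v x -> 0 < x.
    move=> v x; rewrite /L; case: (v == ord0); case/andP => // + _.
    by apply: leq_trans.
  have H2 : forall v, card_ge (L v) k.
    move=> v; rewrite /L; case: (v == ord0).
    + exists (iota 1 m.-1); split; [exact: iota_uniq | by rewrite size_iota -ltnS (ltn_predK m0) |].
      by move=> x; rewrite mem_iota add1n (ltn_predK m0).
    + exists (iota m m.-1); split; [exact: iota_uniq | by rewrite size_iota -ltnS (ltn_predK m0) |].
      by move=> x; rewrite mem_iota.
  case: (Hk L H1 H2) => C [[_ HC] LC].
  have C0 : C ord0 < m by have := LC ord0; rewrite /L eqxx => /andP[].
  have Cl : forall i : 'I_m, m <= C (lift ord0 i) < m + m.-1.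
    by move=> i; have := LC (lift ord0 i); rewrite /L l0.
  have inj : injective (fun i : 'I_m => C (lift ord0 i)).
    move=> a b Cab; apply/eqP/negPn/negP => ab.
    set x := lift ord0 a; set y := lift ord0 b.
    have xy : x != y by rewrite (inj_eq (@lift_inj _ ord0)).
    have := HC [set v in [:: x; ord0; y]].
    have hp : HP (star m.+1) [set v in [:: x; ord0; y]].
      exists [:: x; ord0; y]; split => //=.
      rewrite /= /x /y !inE l0 /= -/x -/y; by rewrite (negbTE xy).
    move/(_ hp); apply/negP; apply: (not_um (x := x) (y := y)) => //.
    + by rewrite !inE eqxx.
    + by rewrite !inE eqxx !orbT.
    + move=> w; rewrite !inE => /or3P[] /eqP ->; rewrite ?leqnn -?Cab ?leqnn //.
      by apply: ltnW; apply: leq_trans C0 _; case/andP: (Cl a).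
  have := uniq_leq_size (s1 := [seq C (lift ord0 i) | i <- enum 'I_m]) (s2 := iota m m.-1).
  rewrite map_inj_uniq // enum_uniq size_map size_enum_ord size_iota.
  move=> H; have : m <= m.-1.
    apply: H => // x /mapP [i _ ->]; rewrite mem_iota; exact: Cl.
  by rewrite leqNgt ltn_predL m0.
- have y0 : lift ord0 (Ordinal m0) != ord0 by rewrite l0.
  split.
  + exists (fun v : 'I_m.+1 => if v == ord0 then 2 else 1); split.
    * split; first by move=> v; case: (v == ord0).
      move=> S [p [Hs ->]]; case: p Hs => [//|x q] /andP [Hp Hu].
      case Hin: (ord0 \in x :: q).
        apply: (um_at (x := ord0)); first by rewrite inE.
        by move=> w _ /negbTE ->; rewrite eqxx.
      case: q Hp Hu Hin => [|y r] Hp Hu Hin.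
        apply: (um_at (x := x)); first by rewrite !inE.
        by move=> w; rewrite !inE => ->.
      exfalso; move: Hp => /= /andP [Hxy _].
      have hx : x != ord0 by apply: contraFN Hin => /eqP ->; rewrite inE eqxx.
      have hy : y = ord0.
        apply: val_inj; move: Hxy; rewrite /star /=.
        have -> : (val x == 0) = false by apply/negbTE; move: hx; apply: contra => /eqP hx; apply/eqP/val_inj.
        by case: (nat_of_ord y).
      by move: Hin; rewrite -hy !inE eqxx orbT.
    * rewrite /num_colors.
      set s := [seq _ | v <- enum 'I_m.+1].
      have mem : forall x, x \in s = (x \in [:: 2; 1]).
        move=> x; apply/mapP/idP.
          by case=> v _ ->; case: (v == ord0).
        rewrite !inE => /orP [] /eqP ->.
          by exists ord0; rewrite ?mem_enum ?eqxx.
        by exists (lift ord0 (Ordinal m0)); rewrite ?mem_enum ?(negbTE y0).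
      apply/eqP; rewrite eqn_leq; apply/andP; split.
        apply: (uniq_leq_size (s2 := [:: 2; 1])); first exact: undup_uniq.
        by move=> x; rewrite mem_undup mem.
      apply: (uniq_leq_size (s1 := [:: 2; 1])) => // x.
      by rewrite mem_undup mem.
  + move=> C [_ HC]; rewrite /num_colors.
    set y := lift ord0 (Ordinal m0).
    have Cne : C ord0 != C y.
      apply/eqP => E.
      have hp : HP (star m.+1) [set v in [:: ord0; y]].
        exists [:: ord0; y]; split => //=.
      move: (HC _ hp); apply/negP; apply: (not_um (x := ord0) (y := y)) => //.
      + by rewrite !inE eqxx.
      + by rewrite !inE eqxx orbT.
      + by move=> w; rewrite !inE => /orP [] /eqP ->; rewrite ?E.
    apply: (uniq_leq_size (s1 := [:: C ord0; C y])).
      by rewrite /= inE Cne.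
    move=> x; rewrite mem_undup !inE => /orP [] /eqP ->; apply: map_f; exact: mem_enum.
Qed.
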